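(* Let $N$ be a prime number and $n,t,s$ positive integers with $t\le n$ and $N\ge s+1$. Let $\vec u_1,\dots,\vec u_t\in\mathbb{Z}_N^n$ be linearly independent over $\mathbb{Z}_N$. Let $Q(s)=\{\vec x=(x_1,\dots,x_n)\in\mathbb{Z}_N^n: x_i\in\{0,1,\dots,s\},\ i=1,\dots,n\}$ and $L=\{\sum_{i=1}^t m_i\vec u_i: m_i\in\mathbb{Z}_N\}$. Then $|L\cap Q(s)|\le(s+1)^t$.
   Context: $\mathbb{Z}_N=\mathbb{Z}/N\mathbb{Z}$, viewed as the field with $N$ elements. *)

(* Defs.v *)
From HB Require Import structures.
From mathcomp Require Import all_boot all_order all_algebra.
Set Implicit Arguments. Unset Strict Implicit. Unset Printing Implicit Defensive.
Import Order.TTheory GRing.Theory Num.Theory.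
Local Open Scope ring_scope.

Definition Qcube (N n s : nat) : {set 'rV['F_N]_n} :=
  [set x : 'rV['F_N]_n | [forall i : 'I_n, [exists k : 'I_s.+1, x 0 i == (k : nat)%:R]]].

Definition Llat (N n t : nat) (u : t.-tuple 'rV['F_N]_n) : {set 'rV['F_N]_n} :=
  [set v : 'rV['F_N]_n | [exists m : 'rV['F_N]_t, v == \sum_(i < t) m 0 i *: tnth u i]].

(* Main.v *)
Require Import Defs.
From HB Require Import structures.
From mathcomp Require Import all_boot all_order all_algebra.
Import GRing.Theory.
Local Open Scope ring_scope.

Theorem lemma24 (N n t s : nat) (u : t.-tuple 'rV['F_N]_n) :
  prime N -> (0 < n)%N -> (0 < t)%N -> (0 < s)%N -> (t <= n)%N -> (s.+1 <= N)%N ->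
  free u ->
  (#|Llat u :&: Qcube N n s| <= s.+1 ^ t)%N.
Proof.
move=> _ _ _ _ _ _ fu.
pose U : 'M['F_N]_(t, n) := \matrix_(i, j) (tnth u i) 0 j.
have rowU i : row i U = tnth u i by apply/rowP => j; rewrite !mxE.
have hU : row_free U.
  apply: inj_row_free => v; rewrite mulmx_sum_row => H.
  apply/rowP => i; rewrite mxE.
  move/freeP: fu => /(_ (fun i => v 0 i)); apply.
  rewrite -[RHS]H; apply: eq_bigr => k _; by rewrite rowU (tnth_nth 0).
set r := \rank (trmx U).
pose f := maxrankfun (trmx U).
pose C : 'M['F_N]_(t, r) := trmx (rowsub f (trmx U)).
have hC : row_free C.
  by rewrite /row_free mxrank_tr (eqP (maxrowsub_free _)) /r mxrank_tr (eqP hU).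
have rt : r = t by rewrite /r mxrank_tr (eqP hU).
pose p (v : 'rV['F_N]_n) : 'rV['F_N]_r := \row_k v 0 (f k).
have pM m : p (m *m U) = m *m C.
  apply/rowP => k; rewrite !mxE; apply: eq_bigr => i _; by rewrite !mxE.
have inL v : v \in Llat u -> exists m, v = m *m U.
  rewrite inE => /existsP [m /eqP ->]; exists m.
  rewrite mulmx_sum_row; apply: eq_bigr => i _; by rewrite rowU.
set A := Llat u :&: Qcube N n s.
have pinj : {in A &, injective p}.
  move=> v w; rewrite !in_setI => /andP [vL _] /andP [wL _].
  case: (inL v vL) => m ->; case: (inL w wL) => m' ->.
  rewrite !pM => /(row_free_inj hC) ->; done.
rewrite -(card_in_imset pinj).
pose g (h : {ffun 'I_r -> 'I_s.+1}) : 'rV['F_N]_r := \row_k ((h k : nat)%:R).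
apply: (@leq_trans #|[set g h | h in [set: {ffun 'I_r -> 'I_s.+1}]]|).
  apply: subset_leq_card; apply/subsetP => y /imsetP [x xA ->].
  move: xA; rewrite !inE => /andP [_ /forallP xQ].
  apply/imsetP.
  exists [ffun k => odflt ord0 [pick j : 'I_s.+1 | x 0 (f k) == (j : nat)%:R]].
    by rewrite inE.
  apply/rowP => k; rewrite !mxE ffunE.
  case: pickP => [j /eqP -> //|H].
  by move: (xQ (f k)) => /existsP [j]; rewrite H.
apply: (leq_trans (leq_imset_card _ _)).
by rewrite cardsT card_ffun !card_ord rt.
Qed.
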